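(* Let $\mathbf p$ be a probability vector with strictly positive entries. For every $\sigma\in\mathcal B$ there exist a constant $c>0$ and a sequence of triples $(R,r,\mathbf i)\in(0,1)\times(0,1)\times\Sigma$ with $R/r\to\infty$ such that for every triple in the sequence \[ \frac{\mu_{\mathbf p}(B_{\mathbf i}(R))}{\mu_{\mathbf p}(B_{\mathbf i}(r))}\ge c\Big(\frac Rr\Big)^{\overline S(\mathbf p,\sigma)}. \]
   Context: Setting: $\mathcal I=\{1,\dots,N\}$, $f_i(x)=A_ix+t_i$ on $\mathbb R^d$ with $A_i=\mathrm{diag}(\lambda_i^{(1)},\dots,\lambda_i^{(d)})$, all $\lambda_i^{(n)}\in(0,1)$, $f_i([0,1]^d)\subset[0,1]^d$, no two maps agree on $[0,1]^d$, and for all $m\ne n$ some $i$ has $\lambda_i^{(n)}\ne\lambda_i^{(m)}$. $\Sigma=\mathcal I^{\mathbb N}$, $\mu_{\mathbf p}=\mathbf p^{\mathbb N}$. For $\mathbf i\in\Sigma$, $r>0$, $L_{\mathbf i}(r,n)$ is the unique integer with $\prod_{\ell=1}^{L_{\mathbf i}(r,n)}\lambda_{i_\ell}^{(n)}\le r<\prod_{\ell=1}^{L_{\mathbf i}(r,n)-1}\lambda_{i_\ell}^{(n)}$. For a permutation $\sigma$ of $\{1,\dots,d\}$: $\mathbf i$ determines a strictly $\sigma$-ordered cylinder at scale $r$ if, with $L=L_{\mathbf i}(r,\sigma_d)$, $\prod_{\ell=1}^L\lambda_{i_\ell}^{(\sigma_d)}<\dots<\prod_{\ell=1}^L\lambda_{i_\ell}^{(\sigma_1)}$;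 $\mathcal B$ is the set of $\sigma$ realised in this way by some $\mathbf i,r$. $\mathbf i$ determines a $\sigma$-ordered cube at scale $r$ if $L_{\mathbf i}(r,\sigma_d)\le\dots\le L_{\mathbf i}(r,\sigma_1)$, ties resolved by: if coordinates $k<m$ have $L_{\mathbf i}(r,k)=L_{\mathbf i}(r,m)$ then $k$ precedes $m$ iff $\prod_{\ell=1}^{L_{\mathbf i}(r,k)}\lambda_{i_\ell}^{(k)}\ge\prod_{\ell=1}^{L_{\mathbf i}(r,k)}\lambda_{i_\ell}^{(m)}$; write $\sigma_{\mathbf i}(r)$ for this ordering. $E_n^\sigma$: span of coordinate axes $\sigma_1,\dots,\sigma_n$; $f_i,f_j$ overlap exactly on $E_n^\sigma$ if their orthogonal projections onto $E_n^\sigma$ agree on $[0,1]^d$. For $1\le n\le d-1$, $\mathcal I_n^\sigma$ is the set of $j$ such that no $i<j$ overlaps exactly with $j$ on $E_n^\sigma$; $\mathcal I_d^\sigma=\mathcal I$; $\Pi_n^\sigma j$ is the unique element of $\mathcal I_n^\sigma$ overlapping exactly with $j$ on $E_n^\sigma$ ($\Pi_d^\sigma=\mathrm{id}$, $\Pi_0^\sigma j=\emptyset$), extended to $\Sigma$ coordinatewise. $p_n^\sigma(i)=\sum_{j:\Pi_n^\sigma j=i}p(j)$, $p_0^\sigma(\emptyset)=1$, $P^\sigma_{n-1}(i)=p_n^\sigma(i)/p^\sigma_{n-1}(\Pi^\sigma_{n-1}i)$ for $i\in\mathcal I_n^\sigma$, and $\overline S(\mathbf p,\sigma)=\sum_{n=1}^d\max_{i\in\mathcal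 I_n^\sigma}\frac{\log P^\sigma_{n-1}(i)}{\log\lambda_i^{(\sigma_n)}}$. $B_{\mathbf i}(r)=\{\mathbf j\in\Sigma:|\Pi_\tau\mathbf j\wedge\Pi_\tau\mathbf i|\ \text{conditions}\}$ is defined as $\{\mathbf j:|\Pi_n^{\tau}\mathbf j\wedge\Pi_n^{\tau}\mathbf i|\ge L_{\mathbf i}(r,\tau_n)\ \forall n\}$ with $\tau=\sigma_{\mathbf i}(r)$ and $\wedge$ the longest common prefix. *)

(* Defs.v *)
From HB Require Import structures.
From mathcomp Require Import all_boot all_order all_algebra all_fingroup.
From mathcomp Require Import all_classical all_reals all_analysis.
Set Implicit Arguments.
Unset Strict Implicit.
Unset Printing Implicit Defensive.
Import Order.TTheory GRing.Theory Num.Theory.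
Local Open Scope ring_scope.

(* Symbolic space Sigma = I^N, with I = 'I_N (0-based indices, order kept). *)
Definition Sigma (N : nat) := nat -> 'I_N.

Section Carpets.
Variable R : realType.
Variables N d : nat.
(* The ambient dimension is d.+1; coordinates are 'I_d.+1
   (coordinate n of the paper, 1 <= n <= d+1, is the ordinal n-1). *)
Notation I := 'I_N.
Notation C := 'I_d.+1.
Variables lam t : I -> C -> R.   (* A_i = diag(lam i), translation t i *)

Definition ucube (x : C -> R) : Prop := forall c, 0 <= x c <= 1.

Definition affmap (i : I) (x : C -> R) : C -> R := fun c => lam i c * x c + t i c.

Definition prodlam (w : Sigma N) (c : C) (L : nat) : R :=
  \prod_(l < L) lam (w l) c.

(* L_w(r,c): least L with prodlam w c L <= r (for 0<r<1 this is the unique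
   integer with prod_{1..L} <= r < prod_{1..L-1}). *)
Definition Lidx (w : Sigma N) (r : R) (c : C) : nat :=
  match pselect (exists L, prodlam w c L <= r) with
  | left h => @ex_minn (fun L => prodlam w c L <= r) h
  | right _ => 0%N
  end.

Definition strict_ordered (s : {perm C}) (w : Sigma N) (r : R) : Prop :=
  let L := Lidx w r (s ord_max) in
  forall a b : C, (a < b)%N -> prodlam w (s b) L < prodlam w (s a) L.

Definition inB (s : {perm C}) : Prop :=
  exists (w : Sigma N) (r : R), 0 < r /\ strict_ordered s w r.

Definition prec (w : Sigma N) (r : R) (k m : C) : bool :=
  (Lidx w r m < Lidx w r k)%N ||
  ((Lidx w r k == Lidx w r m) &&
   (if (k < m)%N then prodlam w m (Lidx w r k) <= prodlam w k (Lidx w r k)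
    else prodlam w m (Lidx w r k) < prodlam w k (Lidx w r k))).

Definition cube_order (w : Sigma N) (r : R) : {perm C} :=
  odflt 1%g [pick s : {perm C} | [forall a : C, forall b : C,
                                   (a < b)%N ==> prec w r (s a) (s b)]].

(* f_i, f_j overlap exactly on E_n^s = span of axes s_1..s_n
   (0-based: s a for a < n) *)
Definition overlapE (s : {perm C}) (n : nat) (i j : I) : Prop :=
  forall x, ucube x -> forall a : C, (a < n)%N -> affmap i x (s a) = affmap j x (s a).

Definition InI (s : {perm C}) (n : nat) (j : I) : bool :=
  (n == d.+1) || [forall i : I, (i < j)%N ==> ~~ `[< overlapE s n i j >]].

Definition Pi (s : {perm C}) (n : nat) (j : I) : I :=
  if n == d.+1 then j
  else odflt j [pick i : I | InI s n i && `[< overlapE s n i j >]].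

Variable p : I -> R.

Definition pn (s : {perm C}) (n : nat) (i : I) : R :=
  \sum_(j : I | Pi s n j == i) p j.

(* P_{n-1}^s(i) = p_n^s(i) / p_{n-1}^s(Pi_{n-1}^s i), with p_0 = 1 *)
Definition Pcond (s : {perm C}) (n : nat) (i : I) : R :=
  if n == 1%N then pn s 1 i else pn s n i / pn s n.-1 (Pi s n.-1 i).

(* \overline S(p, s); the paper's index n = k+1, s_n = s k *)
Definition Sbar (s : {perm C}) : R :=
  \sum_(k < d.+1)
    \big[Num.max/0]_(i : I | InI s k.+1 i)
       (ln (Pcond s k.+1 i) / ln (lam i (s k))).

Definition Bset (w : Sigma N) (r : R) : Sigma N -> Prop :=
  fun v => let tau := cube_order w r in
    forall (k : C) (l : nat), (l < Lidx w r (tau k))%N ->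
      Pi tau k.+1 (v l) = Pi tau k.+1 (w l).

Definition maxL (w : Sigma N) (r : R) : nat := \max_(c : C) Lidx w r c.

(* Bernoulli measure mu_p of a set S determined by the first K symbols:
   sum of prod p over the length-K words whose cylinder lies in S. *)
Definition extend (K : nat) (u : {ffun 'I_K -> I}) (w0 : Sigma N) : Sigma N :=
  fun l => match (insub l : option 'I_K) with Some o => u o | None => w0 l end.

Definition cylmeas (K : nat) (S : Sigma N -> Prop) (w0 : Sigma N) : R :=
  \sum_(u : {ffun 'I_K -> I} | `[< S (extend u w0) >]) \prod_(l < K) p (u l).

(* mu_p(B_w(r)); B_w(r) depends only on the first maxL w r symbols *)
Definition muB (w : Sigma N) (r : R) : R := cylmeas (maxL w r) (Bset w r) w.

End Carpets.

(* Main.v *)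
Require Import Defs.
From HB Require Import structures.
From mathcomp Require Import all_boot all_order all_algebra all_fingroup.
From mathcomp Require Import all_classical all_reals all_analysis.
From mathcomp Require Import ring lra zify.
Import Order.TTheory GRing.Theory Num.Theory.
Local Open Scope ring_scope.
Set Implicit Arguments.
Unset Strict Implicit.
Unset Printing Implicit Defensive.

Section PartA.
Variable R : realType.
Variables N d : nat.
Variables lam t : 'I_N -> 'I_d.+1 -> R.
Variable p : 'I_N -> R.
Hypothesis Hdist : forall i j : 'I_N, i <> j ->
             ~ (forall x, ucube x -> affmap lam t i x = affmap lam t j x).
Hypothesis Hp : forall i, 0 < p i.
Hypothesis Hp1 : \sum_(i : 'I_N) p i = 1.
Variable s : {perm 'I_d.+1}.

Local Notation ov n i j := (overlapE lam t s n i j).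

Lemma ov_refl n i : ov n i i.
Proof. by move=> x _ a _. Qed.
Lemma ov_sym n i j : ov n i j -> ov n j i.
Proof. by move=> h x hx a ha; rewrite (h x hx a ha). Qed.
Lemma ov_trans n i j k : ov n i j -> ov n j k -> ov n i k.
Proof. by move=> h1 h2 x hx a ha; rewrite (h1 x hx a ha) (h2 x hx a ha). Qed.
Lemma ov_mono m n i j : (m <= n)%N -> ov n i j -> ov m i j.
Proof. by move=> hmn h x hx a ha; apply: h => //; apply: leq_trans hmn. Qed.
Lemma ov0 i j : ov 0 i j.
Proof. by move=> x _ a. Qed.
Lemma ov_top i j : ov d.+1 i j -> i = j.
Proof.
move=> h; case: (eqVneq i j) => // /eqP hij; exfalso; apply: (Hdist hij).
move=> x hx; apply: boolp.funext => c.
have := h x hx (s^-1 c)%g (ltn_ord _); by rewrite permKV.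
Qed.

Lemma InI_P n j : n != d.+1 ->
  InI lam t s n j = [forall i : 'I_N, (i < j)%N ==> ~~ `[< ov n i j >]].
Proof. by rewrite /InI => /negbTE ->. Qed.

Lemma Pi_spec n j : (n <= d.+1)%N ->
  InI lam t s n (Pi lam t s n j) /\ ov n (Pi lam t s n j) j.
Proof.
move=> hn; rewrite /Pi; case: eqP => [->|/eqP hne].
  by split; [rewrite /InI eqxx | exact: ov_refl].
case: pickP => [i /andP[hi /asboolP hov]|hnone] //=.
exfalso.
have hj : `[< ov n j j >] by apply/asboolP; exact: ov_refl.
case: (arg_minnP (P := fun i => `[< ov n i j >]) (fun i : 'I_N => nat_of_ord i) hj) => i0 hi0b hmin.
have hi0 : ov n i0 j by apply/asboolP.
move: (hnone i0); rewrite hi0b andbT => /negP; apply.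
rewrite InI_P //; apply/forallP => k; apply/implyP => hk; apply/negP => /asboolP hk0.
have : (i0 <= k)%N by apply: hmin; apply/asboolP; exact: ov_trans hk0 hi0.
by rewrite leqNgt hk.
Qed.

Lemma InI_uniq n a b : (n <= d.+1)%N -> InI lam t s n a -> InI lam t s n b ->
  ov n a b -> a = b.
Proof.
move=> hn ha0 hb0; case: (eqVneq n d.+1) => [->|hne]; first exact: ov_top.
move: ha0 hb0; rewrite !InI_P // => /forallP ha /forallP hb hab.
case: (ltngtP a b) => [h|h|/val_inj //].
  by move: (hb a); rewrite h /= => /negP; case; apply/asboolP.
by move: (ha b); rewrite h /= => /negP; case; apply/asboolP; exact: ov_sym.
Qed.

Lemma Pi_eqP n a b : (n <= d.+1)%N ->
  Pi lam t s n a = Pi lam t s n b <-> ov n a b.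
Proof.
move=> hn; have [ia oa] := Pi_spec a hn; have [ib ob] := Pi_spec b hn.
split=> [e|h].
  by apply: ov_trans (ov_sym oa) _; rewrite e.
apply: InI_uniq ia ib _ => //; apply: ov_trans oa _; apply: ov_trans h (ov_sym ob).
Qed.

Lemma Pi_id n i : (n <= d.+1)%N -> InI lam t s n i -> Pi lam t s n i = i.
Proof.
move=> hn hi; have [ia oa] := Pi_spec i hn; exact: InI_uniq ia hi oa.
Qed.

Definition mass n i := \sum_(j | `[< ov n i j >]) p j.

Lemma mass_gt0 n i : 0 < mass n i.
Proof.
rewrite /mass (bigD1 i) /=; last by apply/asboolP; exact: ov_refl.
apply: (lt_le_trans (Hp i)); rewrite lerDl.
by apply: sumr_ge0 => j _; exact: ltW.
Qed.

Lemma mass_class n i i' : ov n i i' -> mass n i = mass n i'.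
Proof.
move=> h; apply: eq_bigl => j; apply/asboolP/asboolP => hj.
  exact: ov_trans (ov_sym h) hj.
exact: ov_trans h hj.
Qed.

Lemma mass0 i : mass 0 i = 1.
Proof. by rewrite -Hp1; apply: eq_bigl => j; apply/asboolP; exact: ov0. Qed.

Lemma mass_mono n i : mass n.+1 i <= mass n i.
Proof.
rewrite /mass [X in _ <= X](bigID (fun j => `[< ov n.+1 i j >])) /=.
rewrite -[X in X <= _]addr0; apply: lerD.
  rewrite le_eqVlt; apply/orP; left; apply/eqP; apply: eq_bigl => j.
  apply/asboolP/andP => [h|[_ /asboolP //]]; split; apply/asboolP => //.
  exact: ov_mono h.
by apply: sumr_ge0 => j _; exact: ltW.
Qed.

Hypothesis Hlam : forall i c, 0 < lam i c < 1.

Lemma pn_mass n i : (n <= d.+1)%N -> InI lam t s n i -> pn lam t p s n i = mass n i.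
Proof.
move=> hn hi; apply: eq_bigl => j; rewrite -{1}(Pi_id hn hi).
apply/eqP/asboolP => [h|h].
  by apply: ov_sym; apply/(Pi_eqP _ _ hn).
by apply/(Pi_eqP _ _ hn); exact: ov_sym.
Qed.

Lemma Pcond_mass k i : (k < d.+1)%N -> InI lam t s k.+1 i ->
  Pcond lam t p s k.+1 i = mass k.+1 i / mass k i.
Proof.
move=> hk hi; rewrite /Pcond; case: k hk hi => [|k] hk hi /=.
  by rewrite mass0 divr1 pn_mass.
rewrite pn_mass // pn_mass; last by case: (Pi_spec i (ltnW hk)).
  by rewrite (mass_class (ov_sym (proj2 (Pi_spec i (ltnW hk))))).
exact: ltnW.
Qed.

Definition Sval (k : 'I_d.+1) i := ln (Pcond lam t p s k.+1 i) / ln (lam i (s k)).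

Lemma Sval_ge0 (k : 'I_d.+1) i : InI lam t s k.+1 i -> 0 <= Sval k i.
Proof.
move=> hi; rewrite /Sval Pcond_mass //.
apply: mulr_le0; first by apply: ln_le0; rewrite ler_pdivrMr ?mass_gt0 // mul1r mass_mono.
by rewrite invr_le0; apply: ltW; apply: ln_lt0; exact: Hlam.
Qed.

Lemma Sbar_arg (i0 : 'I_N) (k : 'I_d.+1) : exists i, InI lam t s k.+1 i /\
  \big[Num.max/0]_(i : 'I_N | InI lam t s k.+1 i) Sval k i = Sval k i.
Proof.
have hj : InI lam t s k.+1 (Pi lam t s k.+1 i0) by case: (Pi_spec i0 (ltn_ord k)).
exists [arg max_(i > Pi lam t s k.+1 i0 | InI lam t s k.+1 i) Sval k i]%O.
split; first by case: arg_maxP.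
by apply: bigmax_eq_arg => // i hi; exact: Sval_ge0.
Qed.


Definition Aset (w : Sigma N) (r : R) (l : nat) (a : 'I_N) : bool :=
  [forall k : 'I_d.+1, (l < Lidx lam w r (cube_order lam w r k))%N ==>
     (Pi lam t (cube_order lam w r) k.+1 a == Pi lam t (cube_order lam w r) k.+1 (w l))].

Definition fm w r l := \sum_(a | Aset w r l a) p a.

Lemma Lidx_le_maxL w r c : (Lidx lam w r c <= maxL lam w r)%N.
Proof. by rewrite /maxL; apply: (leq_bigmax c). Qed.

Lemma Bset_iff w r (u : {ffun 'I_(maxL lam w r) -> 'I_N}) :
  Bset lam t w r (extend u w) <-> [forall l : 'I_(maxL lam w r), Aset w r l (u l)].
Proof.
have ext : forall l : 'I_(maxL lam w r), extend u w l = u l.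
  move=> l; rewrite /extend; case: insubP => [ o _ hv | hn ].
    by congr (u _); apply: val_inj.
  by rewrite ltn_ord in hn.
split=> [h|/forallP h].
  apply/forallP => l; apply/forallP => k; apply/implyP => hl.
  by apply/eqP; rewrite -ext; apply: h.
move=> k l hl.
have hlM : (l < maxL lam w r)%N by apply: leq_trans hl (Lidx_le_maxL _ _ _).
have := h (Ordinal hlM); move/forallP/(_ k)/implyP/(_ hl)/eqP.
by rewrite -ext.
Qed.

Lemma fm_one w r l : (maxL lam w r <= l)%N -> fm w r l = 1.
Proof.
move=> hl; rewrite /fm -Hp1; apply: eq_bigl => a.
apply/forallP => k; apply/implyP => hk; exfalso.
have := leq_trans hk (Lidx_le_maxL _ _ _); rewrite ltnNge hl //.
Qed.

Lemma muB_prod w r K : (maxL lam w r <= K)%N ->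
  muB lam t p w r = \prod_(0 <= l < K) fm w r l.
Proof.
move=> hK; rewrite /muB /cylmeas.
set M := maxL lam w r.
pose F (l : 'I_M) (a : 'I_N) := if Aset w r l a then p a else 0.
transitivity (\sum_(u : {ffun 'I_M -> 'I_N}) \prod_(l < M) F l (u l)).
  rewrite big_mkcond; apply: eq_bigr => u _.
  case: asboolP => [/Bset_iff /forallP H|/Bset_iff H].
    by apply: eq_bigr => l _; rewrite /F H.
  move: H => /negP; rewrite negb_forall => /existsP [l hl].
  by rewrite (bigD1 l) //= /F (negbTE hl) mul0r.
rewrite -bigA_distr_bigA.
rewrite (@big_cat_nat _ _ _ M) //=.
rewrite [X in _ * X]big_nat_cond [X in _ * X]big1 ?mulr1; last first.
  by move=> l /andP[/andP[hl _] _]; apply: fm_one.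
rewrite big_mkord; apply: eq_bigr => l _.
by rewrite /fm [RHS]big_mkcond.
Qed.



Lemma sub_sum (P Q : pred 'I_N) : (forall a, P a -> Q a) ->
  \sum_(a | P a) p a <= \sum_(a | Q a) p a.
Proof.
move=> h; rewrite [X in X <= _]big_mkcond [X in _ <= X]big_mkcond /=.
apply: ler_sum => a _; case: ifP => [/h -> //|_]; case: ifP => // _.
exact: ltW.
Qed.

Lemma fm_pos w r l : 0 < fm w r l.
Proof.
rewrite /fm (bigD1 (w l)) /=; last by apply/forallP => k; apply/implyP.
apply: (lt_le_trans (Hp (w l))); rewrite lerDl.
by apply: sumr_ge0 => j _; exact: ltW.
Qed.

Lemma fm_mono w r1 r2 l : cube_order lam w r1 = cube_order lam w r2 ->
  (forall c, (Lidx lam w r1 c <= Lidx lam w r2 c)%N) ->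
  fm w r2 l <= fm w r1 l.
Proof.
move=> ho hL; apply: sub_sum => a /forallP h; apply/forallP => k.
apply/implyP => hk; rewrite ho; have := h k; rewrite -ho => /implyP; apply.
exact: leq_trans hk (hL _).
Qed.

Lemma fm_ge w r (n : 'I_d.+1) l : cube_order lam w r = s ->
  (forall k : 'I_d.+1, (n <= k)%N -> (Lidx lam w r (s k) <= Lidx lam w r (s n))%N) ->
  (Lidx lam w r (s n) <= l)%N -> mass n (w l) <= fm w r l.
Proof.
move=> ho hmon hl; apply: sub_sum => a /asboolP hov.
apply/forallP => k; apply/implyP; rewrite ho => hk.
have hkn : (k < n)%N.
  rewrite ltnNge; apply/negP => hnk.
  by have := leq_trans hk (leq_trans (hmon k hnk) hl); rewrite ltnn.
apply/eqP/Pi_eqP; first exact: ltn_ord.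
by apply: ov_sym; apply: ov_mono hov.
Qed.

Lemma fm_le w r (n : 'I_d.+1) l : cube_order lam w r = s ->
  (l < Lidx lam w r (s n))%N -> fm w r l <= mass n.+1 (w l).
Proof.
move=> ho hl; apply: sub_sum => a /forallP /(_ n); rewrite ho hl /= => /eqP h.
by apply/asboolP; apply: ov_sym; apply/(Pi_eqP _ _ (ltn_ord n)).
Qed.

Lemma prodlam_gt0 w c L : 0 < prodlam lam w c L.
Proof. by apply: prodr_gt0 => l _; case/andP: (Hlam (w l) c). Qed.

Lemma prodlam_nat w c L : prodlam lam w c L = \prod_(0 <= l < L) lam (w l) c.
Proof. by rewrite /prodlam big_mkord. Qed.

Lemma prodlamS w c L : prodlam lam w c L.+1 = prodlam lam w c L * lam (w L) c.
Proof. by rewrite /prodlam big_ord_recr. Qed.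

Lemma prodlam_split w c L L' : (L <= L')%N ->
  prodlam lam w c L' = prodlam lam w c L * \prod_(L <= l < L') lam (w l) c.
Proof. by move=> h; rewrite !prodlam_nat (@big_cat_nat _ _ _ L 0 L') //=. Qed.

Lemma prodlam_anti w c L L' : (L <= L')%N -> prodlam lam w c L' <= prodlam lam w c L.
Proof.
move=> h; rewrite (prodlam_split _ _ h) ler_piMr ?(ltW (prodlam_gt0 _ _ _)) //.
by apply: prodr_ile1 => l _; case/andP: (Hlam (w l) c) => h1 h2; rewrite (ltW h1) (ltW h2).
Qed.

Lemma Lidx_P w r c : (exists L, prodlam lam w c L <= r) ->
  prodlam lam w c (Lidx lam w r c) <= r /\
  (forall L, prodlam lam w c L <= r -> (Lidx lam w r c <= L)%N).
Proof.
move=> ex; rewrite /Lidx; case: pselect => [h|//].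
by case: ex_minnP => m hm hmin; split=> // L hL; apply: hmin.
Qed.

Lemma Lidx_le w r c L : prodlam lam w c L <= r -> (Lidx lam w r c <= L)%N.
Proof. by move=> h; apply: (proj2 (Lidx_P _)) => //; exists L. Qed.

Lemma Lidx_spec w r c L : prodlam lam w c L <= r ->
  prodlam lam w c (Lidx lam w r c) <= r.
Proof. by move=> h; apply: (proj1 (Lidx_P _)); exists L. Qed.

Lemma Lidx_gt w r c L0 L : prodlam lam w c L0 <= r -> r < prodlam lam w c L ->
  (L < Lidx lam w r c)%N.
Proof.
move=> h0 h; rewrite ltnNge; apply/negP => hle.
have := prodlam_anti w c hle; have := Lidx_spec h0.
move=> h1 h2; have := le_trans h2 h1; by rewrite leNgt h.
Qed.

Lemma Lidx_prev w r c L0 : prodlam lam w c L0 <= r -> (0 < Lidx lam w r c)%N ->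
  r < prodlam lam w c (Lidx lam w r c).-1.
Proof.
move=> h0 hpos; rewrite ltNge; apply/negP => /Lidx_le.
by case: (Lidx lam w r c) hpos => // m _ /=; rewrite ltnn.
Qed.

Lemma Lidx_anti w r1 r2 c L0 : r1 <= r2 -> prodlam lam w c L0 <= r1 ->
  (Lidx lam w r2 c <= Lidx lam w r1 c)%N.
Proof. by move=> hr h0; apply: Lidx_le; apply: le_trans (Lidx_spec h0) hr. Qed.

Lemma perm_incr_ge n (q : {perm 'I_n}) :
  (forall a b : 'I_n, (a < b)%N -> (q a < q b)%N) -> forall a : 'I_n, (a <= q a)%N.
Proof.
move=> h; suff H : forall k (a : 'I_n), nat_of_ord a = k -> (k <= q a)%N by move=> a; apply: H.
elim=> [|k IH] a ha; first done.
have hk : (k < n)%N by rewrite -ltnS -ha ltnW // ltnS.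
have h1 := IH (Ordinal hk) erefl.
have h2 : (q (Ordinal hk) < q a)%N by apply: h; rewrite /= ha.
exact: leq_ltn_trans h1 h2.
Qed.

Lemma perm_incr_id n (q : {perm 'I_n}) :
  (forall a b : 'I_n, (a < b)%N -> (q a < q b)%N) -> forall a : 'I_n, q a = a.
Proof.
move=> h.
have hV : forall a b : 'I_n, (a < b)%N -> ((q^-1)%g a < (q^-1)%g b)%N.
  move=> a b hab; rewrite ltnNge; apply/negP; rewrite leq_eqVlt => /orP [/eqP e|hlt].
    have eab : b = a by apply: (@perm_inj _ (q^-1)%g); apply: val_inj.
    by move: hab; rewrite eab ltnn.
  by have := h _ _ hlt; rewrite !permKV => hba; have := ltn_trans hab hba; rewrite ltnn.
move=> a; apply: val_inj; apply/eqP; rewrite eqn_leq perm_incr_ge // andbT.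
by have := perm_incr_ge hV (q a); rewrite permK.
Qed.

Lemma prec_le w r x y : prec lam w r x y -> (Lidx lam w r y <= Lidx lam w r x)%N.
Proof. by rewrite /prec => /orP [/ltnW //|/andP [/eqP -> _]]. Qed.

Lemma cube_order_eq w r :
  (forall a b : 'I_d.+1, (a < b)%N -> (Lidx lam w r (s b) < Lidx lam w r (s a))%N) ->
  cube_order lam w r = s.
Proof.
move=> hs; rewrite /cube_order; case: pickP => [s' hs'|hnone] /=.
  pose q := (s' * s^-1)%g.
  have hq : forall a, s (q a) = s' a by move=> a; rewrite permM permKV.
  have incr : forall a b : 'I_d.+1, (a < b)%N -> (q a < q b)%N.
    move=> a b hab; rewrite ltnNge; apply/negP; rewrite leq_eqVlt => /orP [/eqP e|hlt].
      have : q b = q a by apply: val_inj.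
      by move/perm_inj => eab; move: hab; rewrite eab ltnn.
    have := hs _ _ hlt; rewrite !hq.
    move/forallP: hs' => /(_ a) /forallP /(_ b); rewrite hab /= => /prec_le hle.
    by move=> hlt2; have := leq_trans hlt2 hle; rewrite ltnn.
  by apply/permP => a; rewrite -hq (perm_incr_id incr).
exfalso; move: (hnone s) => /negP; apply; apply/forallP => a; apply/forallP => b.
by apply/implyP => hab; rewrite /prec hs.
Qed.

Definition qs (v : seq 'I_N) (c : 'I_d.+1) : R := \sum_(x <- v) - ln (lam x c).

Lemma nlnlam_gt0 i c : 0 < - ln (lam i c).
Proof. by rewrite oppr_gt0; apply: ln_lt0; exact: Hlam. Qed.

Lemma qs_cat v1 v2 c : qs (v1 ++ v2) c = qs v1 c + qs v2 c.
Proof. by rewrite /qs big_cat. Qed.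

Lemma qs_nil c : qs [::] c = 0.
Proof. by rewrite /qs big_nil. Qed.

Lemma qs_ge0 v c : 0 <= qs v c.
Proof. by apply: sumr_ge0 => x _; exact: ltW (nlnlam_gt0 _ _). Qed.

Lemma qs_nseq m i c : qs (nseq m i) c = m%:R * (- ln (lam i c)).
Proof.
elim: m => [|m IH]; first by rewrite qs_nil mul0r.
by rewrite /= -cat1s qs_cat IH /qs big_seq1 -nat1r mulrDl mul1r.
Qed.

Lemma qs_flat k u c : qs (flatten (nseq k u)) c = k%:R * qs u c.
Proof.
elim: k => [|k IH]; first by rewrite qs_nil mul0r.
by rewrite /= qs_cat IH -nat1r mulrDl mul1r.
Qed.

Lemma prodlam_qs (i0 : 'I_N) (v : seq 'I_N) c L : (L <= size v)%N ->
  prodlam lam (fun l => nth i0 v l) c L = expR (- qs (take L v) c).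
Proof.
elim: L => [|L IH] hL.
  by rewrite take0 qs_nil oppr0 expR0 /prodlam big_ord0.
rewrite prodlamS IH ?(ltnW hL) // (take_nth i0 hL) -cats1 qs_cat /qs big_seq1.
rewrite opprD opprK expRD lnK //; rewrite posrE; by case/andP: (Hlam (nth i0 v L) c).
Qed.

Lemma exists_step (q0 T a : R) : 0 < a -> q0 < T ->
  exists k : nat, q0 + k%:R * a < T /\ T <= q0 + k.+1%:R * a.
Proof.
move=> ha hq.
have ex : exists k : nat, T <= q0 + k.+1%:R * a.
  have h0 : 0 <= (T - q0) / a by apply: divr_ge0; [rewrite subr_ge0 ltW | exact: ltW].
  exists (Num.Def.archi_bound ((T - q0) / a)).
  have := archi_boundP h0; rewrite ltr_pdivrMr // => h.
  rewrite -lerBlDl; apply: ltW; apply: (lt_le_trans h).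
  by rewrite ler_pM2r // ler_nat.
case: (ex_minnP ex) => k hk hmin; exists k; split=> //.
case: k hk hmin => [|k] hk hmin; first by rewrite mul0r addr0.
rewrite ltNge; apply/negP => hk'.
by have := hmin k hk'; rewrite ltnn.
Qed.

Lemma prod_window (K a b : nat) (x : R) : (a <= b)%N -> (b <= K)%N ->
  \prod_(0 <= l < K) (if (a <= l < b)%N then x else 1) = x ^+ (b - a).
Proof.
move=> hab hbK.
rewrite (@big_cat_nat _ _ _ b 0 K) //= (@big_cat_nat _ _ _ a 0 b) //=.
rewrite [X in _ * X]big1_seq; last first.
  by move=> l /andP [_]; rewrite mem_index_iota => /andP [hl _]; rewrite ltnNge hl andbF.
rewrite big1_seq; last first.
  by move=> l /andP [_]; rewrite mem_index_iota => /andP [_ hl]; rewrite leqNgt hl.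
rewrite mul1r mulr1 -prodr_const_nat; apply: eq_big_nat => l hl; by rewrite hl.
Qed.

Lemma lam_ge i c (b : R) : - ln (lam i c) <= b -> expR (- b) <= lam i c.
Proof.
move=> h; have hp : 0 < lam i c by case/andP: (Hlam i c).
by rewrite -[lam i c]lnK ?posrE // ler_expR lerNl.
Qed.

Lemma natA1 (n j : nat) : (0 < n)%N -> (n.-1 <= j)%N -> j <> n.-1 -> (n <= j)%N.
Proof. lia. Qed.
Lemma natA2 (n a b : nat) : (0 < n)%N -> (a < b)%N -> a = n.-1 -> (n <= b)%N.
Proof. lia. Qed.
Lemma natA3 (n a : nat) : (0 < n)%N -> (n.-1 <= a)%N -> a <> n.-1 -> (n <= a)%N.
Proof. lia. Qed.
Lemma natA5 (n : nat) : (0 < n)%N -> (n <= d.+1)%N -> (d.+1 - n.-1)%N = (d.+1 - n).+1.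
Proof. lia. Qed.
Lemma natA4 (n a b : nat) : (n.-1 <= a)%N -> (a < b)%N -> b <> n.-1.
Proof. lia. Qed.

Section Build.
Variable i0 : 'I_N.
Variable u : seq 'I_N.
Variable th : R.
Variable I : 'I_d.+1 -> 'I_N.
Variables bmax bmin T D : R.
Variable M : nat.
Hypothesis Hal : forall n : 'I_d.+1, 0 < qs u (s n).
Hypothesis Hth0 : 0 <= th.
Hypothesis Hthal : forall j m : 'I_d.+1, (j < m)%N -> qs u (s j) <= th * qs u (s m).
Hypothesis Hbmax : forall i c, - ln (lam i c) <= bmax.
Hypothesis Hbmin : forall i c, bmin <= - ln (lam i c).
Hypothesis Hbmin0 : 0 < bmin.
Hypothesis HD : 0 < D.
Hypothesis HM : forall n : 'I_d.+1, D + qs u (s n) <= (M.-1)%:R * bmin.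
Hypothesis HT : th * (T + D + bmax) + (d.+1)%:R * (M%:R * bmax) < T.
Hypothesis HT0 : 0 < T.

Definition Qinv (n : nat) (v : seq 'I_N) (st en : nat -> nat) : Prop :=
  [/\ (forall j : 'I_d.+1, (n <= j)%N ->
      [/\ (st j < en j)%N, (en j <= size v)%N,
          (forall l, (st j <= l < en j)%N -> nth i0 v l = I j),
          qs (take (st j) v) (s j) < T & T + D <= qs (take (en j) v) (s j)]),
  (forall a b : 'I_d.+1, (n <= a)%N -> (a < b)%N -> (en b <= st a)%N),
  (forall j m : 'I_d.+1, (j < m)%N -> (m <= n)%N ->
      qs v (s j) <= th * qs v (s m) + (d.+1 - n)%:R * (M%:R * bmax)) &
  (forall m : 'I_d.+1, m.+1 = n -> qs v (s m) < T)].

Lemma bmax_ge0 : 0 <= bmax.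
Proof. exact: le_trans (ltW (nlnlam_gt0 i0 (s ord0))) (Hbmax _ _). Qed.

Lemma Qinv_init : Qinv d.+1 [::] (fun _ => 0%N) (fun _ => 0%N).
Proof.
split.
- by move=> j; rewrite leqNgt ltn_ord.
- by move=> a b; rewrite leqNgt ltn_ord.
- by move=> j m _ _; rewrite !qs_nil mulr0 subnn mul0r addr0.
- by move=> m _; rewrite qs_nil.
Qed.

Lemma Qinv_step n v st en : (0 < n <= d.+1)%N -> Qinv n v st en ->
  exists v' st' en', Qinv n.-1 v' st' en'.
Proof.
move=> /andP [hn0 hnd] [H1 H2 H3 H5].
have hm : (n.-1 < d.+1)%N by rewrite prednK.
pose m := Ordinal hm.
have hmn : m.+1 = n by rewrite /= prednK.
have hq0 := H5 m hmn.
have [kb [hkb1 hkb2]] := exists_step (Hal m) hq0.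
pose v1 := v ++ flatten (nseq kb u).
have qv1 : forall c, qs v1 c = qs v c + kb%:R * qs u c by move=> c; rewrite qs_cat qs_flat.
pose b := - ln (lam (I m) (s m)).
have hb : 0 < b by exact: nlnlam_gt0.
have hq1 : qs v1 (s m) < T + D by rewrite qv1; apply: (lt_trans hkb1); rewrite ltrDl.
have [mm0 [hmm1 hmm2]] := exists_step hb hq1.
pose mm := mm0.+1.
pose v2 := v1 ++ nseq mm (I m).
have qv2 : forall c, qs v2 c = qs v c + kb%:R * qs u c + mm%:R * (- ln (lam (I m) c)).
  by move=> c; rewrite qs_cat qv1 qs_nseq.
have hmmM : (mm <= M)%N.
  have h1 : mm0%:R * b < D + qs u (s m).
    have e := qv1 (s m).
    have e2 : kb.+1%:R * qs u (s m) = kb%:R * qs u (s m) + qs u (s m).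
      by rewrite -nat1r mulrDl mul1r addrC.
    lra.
  have h2 : mm0%:R * b < (M.-1)%:R * b.
    apply: (lt_le_trans h1); apply: (le_trans (HM m)).
    by rewrite ler_wpM2l // ?ler0n // /b Hbmin.
  rewrite ltr_pM2r // ltr_nat in h2.
  by rewrite /mm; apply: (leq_trans h2); exact: leq_pred.
have hsz1 : (size v <= size v1)%N by rewrite size_cat leq_addr.
have hsz2 : size v2 = (size v1 + mm)%N by rewrite size_cat size_nseq.
have H3' : forall j m' : 'I_d.+1, (j < m')%N -> (m' <= n.-1)%N ->
    qs v2 (s j) <= th * qs v2 (s m') + (d.+1 - n.-1)%:R * (M%:R * bmax).
  move=> j m' hjm hm'; rewrite !qv2.
    have hm'n : (m' <= n)%N by apply: (leq_trans hm'); exact: leq_pred.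
    have := H3 j m' hjm hm'n => h.
    have hsub : (d.+1 - n.-1)%:R * (M%:R * bmax) = (d.+1 - n)%:R * (M%:R * bmax) + M%:R * bmax.
      by rewrite natA5 // -nat1r mulrDl mul1r addrC.
    rewrite hsub.
    have e1 : mm%:R * - ln (lam (I m) (s j)) <= M%:R * bmax.
      apply: ler_pM; [exact: ler0n | exact: ltW (nlnlam_gt0 _ _) | by rewrite ler_nat | exact: Hbmax].
    have e2 : kb%:R * qs u (s j) <= th * (kb%:R * qs u (s m')).
      by rewrite mulrCA ler_wpM2l ?ler0n ?Hthal.
    have e3 : 0 <= th * (mm%:R * - ln (lam (I m) (s m'))).
      by apply: mulr_ge0 => //; apply: mulr_ge0; [exact: ler0n | exact: ltW (nlnlam_gt0 _ _)].
    rewrite !mulrDr.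
    lra.
exists v2, (fun j => if j == n.-1 then size v1 else st j),
           (fun j => if j == n.-1 then (size v1 + mm)%N else en j).
split.
- move=> j hj; case: (eqVneq (nat_of_ord j) n.-1) => hjm.
    have ej : j = m by apply: val_inj.
    rewrite ej; split.
    + by rewrite /mm addnS ltnS leq_addr.
    + by rewrite hsz2.
    + move=> l /andP [hl1 hl2]; rewrite /v2 nth_cat ifN -?leqNgt // nth_nseq.
      by rewrite ltn_subLR // hl2.
    + by rewrite take_size_cat // qv1.
    + rewrite -hsz2 take_size qv2 -qv1; apply: hmm2.
  have hj' : (n <= j)%N by apply: natA1 => //; apply/eqP.
  have [a1 a2 a3 a4 a5] := H1 j hj'.
  have hv2 : v2 = v ++ (flatten (nseq kb u) ++ nseq mm (I m)) by rewrite /v2 /v1 catA.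
  rewrite hv2; split => //.
  + by rewrite size_cat (leq_trans a2) // leq_addr.
  + by move=> l hl; rewrite nth_cat (leq_trans _ a2) ?a3 //; case/andP: hl.
  + by rewrite takel_cat // (leq_trans (ltnW a1)).
  + by rewrite takel_cat.
- move=> a0 b0 ha hab.
  have hb0 : (nat_of_ord b0 == n.-1) = false by apply/eqP; apply: natA4 ha hab.
  rewrite /= hb0.
  case: (eqVneq (nat_of_ord a0) n.-1) => ha0.
    have hb0' : (n <= b0)%N by apply: natA2 hn0 hab ha0.
    by have [_ a2 _ _ _] := H1 b0 hb0'; apply: (leq_trans a2).
  apply: H2 => //; apply: natA3 hn0 ha _ => hh; by move: ha0; rewrite hh eqxx.
- exact: H3'.
- move=> m' hm'.
  have hlt : (m' < m)%N by rewrite /= -hm'.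
  have h := H3' m' m hlt (leqnn _).
  have hv2m : qs v2 (s m) < T + D + bmax.
    rewrite qs_cat qs_nseq /mm -nat1r mulrDl mul1r -/b.
    have := Hbmax (I m) (s m); rewrite -/b => hbb.
    lra.
  have e1 : th * qs v2 (s m) <= th * (T + D + bmax) by rewrite ler_wpM2l // ltW.
  have e2 : (d.+1 - n.-1)%:R * (M%:R * bmax) <= (d.+1)%:R * (M%:R * bmax).
    by rewrite ler_wpM2r ?mulr_ge0 ?ler0n ?bmax_ge0 // ler_nat leq_subr.
  apply: (le_lt_trans h); apply: (le_lt_trans _ HT); exact: lerD.
Qed.

Lemma Qinv_all : exists v st en, Qinv 0 v st en.
Proof.
suff H : forall k, (k <= d.+1)%N -> exists v st en, Qinv (d.+1 - k) v st en.
  by have := H d.+1 (leqnn _); rewrite subnn.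
elim=> [|k IH] ht.
  by exists [::], (fun _ => 0%N), (fun _ => 0%N); rewrite subn0; exact: Qinv_init.
have [v [st [en hq]]] := IH (ltnW ht).
have hn : (0 < d.+1 - k <= d.+1)%N by rewrite subn_gt0 ht leq_subr.
have [v' [st' [en' hq']]] := Qinv_step hn hq.
by exists v', st', en'; rewrite subnS.
Qed.

Hypothesis HI : forall n : 'I_d.+1, InI lam t s n.+1 (I n) /\
  \big[Num.max/0]_(i : 'I_N | InI lam t s n.+1 i) Sval n i = Sval n (I n).

Lemma main_ratio : exists w : Sigma N,
  expR (- (Sbar lam t p s * bmax)) * (expR (- T) / expR (- (T + D))) `^ Sbar lam t p s
  <= muB lam t p w (expR (- T)) / muB lam t p w (expR (- (T + D))).
Proof.
have [v [st [en [H1 H2 _ _]]]] := Qinv_all.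
pose w : Sigma N := fun l => nth i0 v l.
exists w.
set R1 := expR (- T); set r1 := expR (- (T + D)).
have hr1R1 : r1 <= R1 by rewrite /r1 /R1 ler_expR lerN2 lerDl ltW.
pose LR (n : 'I_d.+1) := Lidx lam w R1 (s n).
pose Lr (n : 'I_d.+1) := Lidx lam w r1 (s n).
have F1 : forall n : 'I_d.+1, prodlam lam w (s n) (en n) <= r1.
  move=> n; have [a1 a2 a3 a4 a5] := H1 n (leq0n _).
  by rewrite prodlam_qs // /r1 ler_expR lerN2.
have F2 : forall n : 'I_d.+1, R1 < prodlam lam w (s n) (st n).
  move=> n; have [a1 a2 a3 a4 a5] := H1 n (leq0n _).
  by rewrite prodlam_qs ?(leq_trans (ltnW a1)) // /R1 ltr_expR ltrN2.
have F3 : forall n : 'I_d.+1, (st n < LR n)%N.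
  by move=> n; apply: Lidx_gt (le_trans (F1 n) hr1R1) (F2 n).
have F4 : forall n : 'I_d.+1, (Lr n <= en n)%N by move=> n; apply: Lidx_le (F1 n).
have F5 : forall n : 'I_d.+1, (LR n <= Lr n)%N by move=> n; apply: Lidx_anti hr1R1 (F1 n).
have Ford : forall a b : 'I_d.+1, (a < b)%N -> (en b <= st a)%N.
  by move=> a b hab; apply: H2.
have hoR : cube_order lam w R1 = s.
  apply: cube_order_eq => a b hab.
  exact: leq_ltn_trans (leq_trans (F5 b) (leq_trans (F4 b) (Ford a b hab))) (F3 a).
have hor : cube_order lam w r1 = s.
  apply: cube_order_eq => a b hab.
  exact: leq_trans (leq_ltn_trans (leq_trans (F4 b) (Ford a b hab)) (F3 a)) (F5 a).
have Hwin : forall (n : 'I_d.+1) l, (LR n <= l < Lr n)%N -> w l = I n.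
  move=> n l /andP [h1 h2]; have [a1 a2 a3 a4 a5] := H1 n (leq0n _).
  by apply: a3; rewrite (ltnW (leq_trans (F3 n) h1)) (leq_trans h2 (F4 n)).
have hLRdec : forall a b : 'I_d.+1, (a < b)%N -> (LR b < LR a)%N.
  move=> a b hab.
  exact: leq_ltn_trans (leq_trans (F5 b) (leq_trans (F4 b) (Ford a b hab))) (F3 a).
have Hlen : forall n : 'I_d.+1, D - bmax < (Lr n - LR n)%:R * (- ln (lam (I n) (s n))).
  move=> n.
  set len := (Lr n - LR n)%N; set lm := lam (I n) (s n).
  have hlm : 0 < lm by case/andP: (Hlam (I n) (s n)).
  have hsplit : prodlam lam w (s n) (Lr n) = prodlam lam w (s n) (LR n) * lm ^+ len.
    rewrite (prodlam_split _ _ (F5 n)) -prodr_const_nat; congr (_ * _).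
    by apply: eq_big_nat => l hl; rewrite (Hwin n l hl).
  have hLRpos : (0 < LR n)%N := leq_ltn_trans (leq0n _) (F3 n).
  have hprev : R1 < prodlam lam w (s n) (LR n).-1.
    exact: Lidx_prev (le_trans (F1 n) hr1R1) hLRpos.
  have hLR : R1 * expR (- bmax) < prodlam lam w (s n) (LR n).
    have e : prodlam lam w (s n) (LR n) =
        prodlam lam w (s n) (LR n).-1 * lam (w (LR n).-1) (s n).
      by rewrite -prodlamS prednK.
    rewrite e; apply: (lt_le_trans (y := prodlam lam w (s n) (LR n).-1 * expR (- bmax))).
      by rewrite ltr_pM2r ?expR_gt0.
    by rewrite ler_pM2l ?prodlam_gt0 //; apply: lam_ge; apply: Hbmax.
  have hLr : prodlam lam w (s n) (Lr n) <= r1 := Lidx_spec (F1 n).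
  have key : lm ^+ len * (R1 * expR (- bmax)) < r1.
    apply: (lt_le_trans _ hLr); rewrite hsplit [X in _ < X]mulrC.
    by rewrite ltr_pM2l ?exprn_gt0.
  move: key; rewrite -[lm]lnK ?posrE // -expRM_natl /R1 /r1 -!expRD ltr_expR.
  by rewrite expRK mulrN => key; lra.
have Hratio : \prod_(n < d.+1) (mass n (I n) / mass n.+1 (I n)) ^+ (Lr n - LR n)
    <= muB lam t p w R1 / muB lam t p w r1.
  set K := maxn (maxL lam w R1) (maxL lam w r1).
  rewrite (muB_prod (K := K)) ?leq_maxl // (muB_prod (K := K) (r := r1)) ?leq_maxr //.
  rewrite -prodf_div.
  have -> : \prod_(n < d.+1) (mass n (I n) / mass n.+1 (I n)) ^+ (Lr n - LR n) =
      \prod_(n < d.+1) \prod_(0 <= l < K)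
         (if (LR n <= l < Lr n)%N then mass n (I n) / mass n.+1 (I n) else 1).
    apply: eq_bigr => n _; rewrite prod_window //.
    exact: leq_trans (Lidx_le_maxL _ _ _) (leq_maxr _ _).
  rewrite exchange_big /=; apply: ler_prod => l _; apply/andP; split.
    apply: prodr_ge0 => n _; case: ifP => // _.
    by apply: divr_ge0; apply: ltW; apply: mass_gt0.
  case: (pickP (fun n : 'I_d.+1 => (LR n <= l < Lr n)%N)) => [n hn|hnone].
    rewrite (bigD1 n) //= hn big1 ?mulr1; last first.
      move=> k hk; rewrite ifF //; apply/negP => /andP [hk1 hk2].
      case/andP: hn => hn1 hn2.
      case: (ltngtP k n) => hkn.
      - have := leq_trans hn2 (leq_trans (F4 n) (Ford k n hkn)).
        by move=> h; have := leq_trans (ltn_trans h (F3 k)) hk1; rewrite ltnn.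
      - have := leq_trans hk2 (leq_trans (F4 k) (Ford n k hkn)).
        by move=> h; have := leq_trans (ltn_trans h (F3 n)) hn1; rewrite ltnn.
      - by move: hk; rewrite (val_inj hkn) eqxx.
    case/andP: hn => hn1 hn2.
    have ge : mass n (w l) <= fm w R1 l.
      apply: fm_ge hoR _ hn1 => k hk; case: (ltngtP n k) hk => // hnk _.
        exact: ltnW (hLRdec _ _ hnk).
      by rewrite (val_inj hnk).
    have le : fm w r1 l <= mass n.+1 (w l) by apply: fm_le hor hn2.
    rewrite (Hwin n l) ?hn1 ?hn2 // in ge le.
    apply: ler_pM.
    - exact: ltW (mass_gt0 _ _).
    - by rewrite invr_ge0 ltW ?mass_gt0.
    - exact: ge.
    - by rewrite lef_pV2 ?posrE ?mass_gt0 ?fm_pos.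
  rewrite big1; last by move=> n _; rewrite ifF //; apply: negbTE; rewrite hnone.
  rewrite ler_pdivlMr ?fm_pos // mul1r; apply: fm_mono; first by rewrite hoR hor.
  by move=> c; have := F5 (s^-1 c)%g; rewrite /LR /Lr permKV.
have Hh : forall n : 'I_d.+1, expR (Sval n (I n) * (D - bmax)) <=
    (mass n (I n) / mass n.+1 (I n)) ^+ (Lr n - LR n).
  move=> n; have [hIn _] := HI n.
  have hP := Pcond_mass (ltn_ord n) hIn.
  have hpos : 0 < mass n (I n) / mass n.+1 (I n) by rewrite divr_gt0 ?mass_gt0.
  rewrite -[X in _ <= X ^+ _]lnK ?posrE // -expRM_natl ler_expR.
  have hln : ln (lam (I n) (s n)) < 0 by apply: ln_lt0; exact: Hlam.
  have e : ln (mass n (I n) / mass n.+1 (I n)) = Sval n (I n) * (- ln (lam (I n) (s n))).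
    rewrite /Sval hP -invf_div lnV ?posrE ?divr_gt0 ?mass_gt0 //.
    by rewrite mulrN divfK // ltr0_neq0.
  rewrite e mulrCA; apply: ler_wpM2l; first exact: Sval_ge0.
  exact: ltW (Hlen n).
have hS : Sbar lam t p s = \sum_(n < d.+1) Sval n (I n).
  by apply: eq_bigr => n _; exact: (proj2 (HI n)).
apply: le_trans Hratio.
have Hp2 : \prod_(n < d.+1) expR (Sval n (I n) * (D - bmax)) <=
    \prod_(n < d.+1) (mass n (I n) / mass n.+1 (I n)) ^+ (Lr n - LR n).
  by apply: ler_prod => n _; rewrite (ltW (expR_gt0 _)) Hh.
apply: le_trans Hp2.
rewrite -expR_sum -big_distrl /= -hS.
have hRr : R1 / r1 = expR D by rewrite /R1 /r1 !expRN invrK -expRN -expRD addKr.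
rewrite hRr -expRM -expRD ler_expR.
lra.
Qed.


End Build.

Lemma qs_gt0 v c : v != [::] -> 0 < qs v c.
Proof.
case: v => [//|x v] _; rewrite /qs big_cons.
by apply: ltr_pwDl; [exact: nlnlam_gt0 | exact: qs_ge0].
Qed.

Local Open Scope classical_set_scope.
Local Open Scope ring_scope.

Lemma final_lemma : inB lam s ->
  exists c : R, 0 < c /\
  exists (Rs rs : nat -> R) (ws : nat -> Sigma N),
    (forall k, 0 < Rs k < 1 /\ 0 < rs k < 1) /\
    ((fun k => Rs k / rs k) @ \oo --> +oo) /\
    (forall k, c * (Rs k / rs k) `^ (Sbar lam t p s)
               <= muB lam t p (ws k) (Rs k) / muB lam t p (ws k) (rs k)).
Proof.
move=> [w0 [r0 [hr0 hso]]].
case: (pickP (fun _ : 'I_N => true)) => [i0 _|hnone]; last first.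
  exfalso; move: Hp1; rewrite big1 => [/esym/eqP|i _]; first by rewrite oner_eq0.
  by have := hnone i.
set L0 := Lidx lam w0 r0 (s ord_max).
pose u := mkseq w0 (maxn L0 1).
have hu0 : u != [::] by rewrite -size_eq0 size_mkseq -lt0n leq_maxr.
have Hal : forall n : 'I_d.+1, 0 < qs u (s n) by move=> n; exact: qs_gt0.
have hstrict : forall j m : 'I_d.+1, (j < m)%N -> qs u (s j) < qs u (s m).
  move=> j m hjm; have h := hso j m hjm.
  have hL0 : (0 < L0)%N.
    case: (posnP L0) => // hL; move: h; rewrite /L0 in hL *.
    by rewrite hL /prodlam !big_ord0 ltxx.
  have eu : u = mkseq w0 L0 by rewrite /u (maxn_idPl hL0).
  have ep : forall c, prodlam lam w0 c L0 = expR (- qs u c).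
    move=> c; have hs : size u = L0 by rewrite eu size_mkseq.
    have e : prodlam lam (fun l => nth i0 u l) c L0 = expR (- qs (take L0 u) c).
      by apply: prodlam_qs; rewrite hs.
    rewrite -hs take_size hs in e; rewrite -e.
    by apply: eq_bigr => l _; rewrite eu nth_mkseq.
  by move: h; rewrite -/L0 !ep ltr_expR ltrN2.
pose th := \big[Num.max/0]_(jm : 'I_d.+1 * 'I_d.+1 | (jm.1 < jm.2)%N)
             (qs u (s jm.1) / qs u (s jm.2)).
have Hth0 : 0 <= th.
  apply: (big_ind (fun x => 0 <= x)) => //.
    by move=> x y hx hy; rewrite le_max hx.
  by move=> jm _; apply: divr_ge0; apply: ltW; apply: Hal.
have Hth1 : th < 1.
  apply: bigmax_lt => // jm hjm.
  by rewrite ltr_pdivrMr ?Hal // mul1r hstrict.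
have Hthal : forall j m : 'I_d.+1, (j < m)%N -> qs u (s j) <= th * qs u (s m).
  move=> j m hjm.
  have hr : qs u (s j) / qs u (s m) <= th :=
    @le_bigmax_cond _ _ _ 0 (j, m) (fun jm : 'I_d.+1 * 'I_d.+1 => (jm.1 < jm.2)%N)
      (fun jm : 'I_d.+1 * 'I_d.+1 => qs u (s jm.1) / qs u (s jm.2)) hjm.
  by rewrite ler_pdivrMr ?Hal in hr.
have [I HI] := boolp.choice (fun n => Sbar_arg i0 n).
pose bmax := \big[Num.max/0]_(ic : 'I_N * 'I_d.+1) (- ln (lam ic.1 ic.2)).
have Hbmax : forall i c, - ln (lam i c) <= bmax.
  move=> i c; exact: (@le_bigmax_cond _ _ _ 0 (i, c) xpredT
           (fun ic : 'I_N * 'I_d.+1 => - ln (lam ic.1 ic.2)) isT).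
pose lmax := \big[Num.max/0]_(ic : 'I_N * 'I_d.+1) lam ic.1 ic.2.
have hlmax1 : lmax < 1 by apply: bigmax_lt => // ic _; case/andP: (Hlam ic.1 ic.2).
have hlam_le : forall i c, lam i c <= lmax.
  move=> i c; exact: (@le_bigmax_cond _ _ _ 0 (i, c) xpredT
           (fun ic : 'I_N * 'I_d.+1 => lam ic.1 ic.2) isT).
have hlmax0 : 0 < lmax.
  by apply: lt_le_trans (hlam_le i0 (s ord0)); case/andP: (Hlam i0 (s ord0)).
pose bmin := - ln lmax.
have Hbmin0 : 0 < bmin by rewrite oppr_gt0; apply: ln_lt0; rewrite hlmax0.
have Hbmin : forall i c, bmin <= - ln (lam i c).
  move=> i c; rewrite lerN2 ler_ln ?posrE //; by case/andP: (Hlam i c).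
pose als := \sum_(n < d.+1) qs u (s n).
have hals : forall n : 'I_d.+1, qs u (s n) <= als.
  move=> n; rewrite /als (bigD1 n) //= lerDl; apply: sumr_ge0 => j _; exact: qs_ge0.
have hbmax0 : 0 <= bmax := le_trans (ltW (nlnlam_gt0 i0 (s ord0))) (Hbmax _ _).
have hk : forall k : nat, exists x : R * R * Sigma N,
    [/\ 0 < x.1.1 < 1 /\ 0 < x.1.2 < 1, k%:R <= x.1.1 / x.1.2 &
     expR (- (Sbar lam t p s * bmax)) * (x.1.1 / x.1.2) `^ (Sbar lam t p s)
       <= muB lam t p x.2 x.1.1 / muB lam t p x.2 x.1.2].
  move=> k.
  pose D : R := k%:R + 1.
  have HD : 0 < D by rewrite /D ltr_wpDl ?ler0n.
  pose M := (Num.Def.archi_bound ((D + als) / bmin)).+1.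
  have HM : forall n : 'I_d.+1, D + qs u (s n) <= (M.-1)%:R * bmin.
    move=> n; rewrite /M /=.
    have h0 : 0 <= (D + als) / bmin.
      apply: divr_ge0; last exact: ltW.
      by apply: addr_ge0; [exact: ltW | apply: sumr_ge0 => j _; exact: qs_ge0].
    have := archi_boundP h0; rewrite ltr_pdivrMr // => h.
    by apply: ltW; apply: le_lt_trans h; rewrite lerD2l.
  pose E := (d.+1)%:R * (M%:R * bmax).
  have hE : 0 <= E by rewrite /E !mulr_ge0 ?ler0n.
  have h1th : 0 < 1 - th by rewrite subr_gt0.
  pose T := (th * (D + bmax) + E + 1) / (1 - th).
  have hnum : 0 < th * (D + bmax) + E + 1.
    by rewrite ltr_wpDl // addr_ge0 // mulr_ge0 // addr_ge0 // ltW.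
  have HT0 : 0 < T by rewrite /T divr_gt0.
  have eT : T * (1 - th) = th * (D + bmax) + E + 1 by rewrite /T divfK // lt0r_neq0.
  have HT : th * (T + D + bmax) + E < T by lra.
  have [w hw] := main_ratio i0 Hal Hth0 Hthal Hbmax Hbmin HD HM HT HT0 HI.
  exists (expR (- T), expR (- (T + D)), w) => /=.
  have hRr : expR (- T) / expR (- (T + D)) = expR D.
    by rewrite !expRN invrK -expRN -expRD addKr.
  split=> //.
  - by rewrite !expR_gt0 !expR_lt1 !oppr_lt0 HT0 ltr_wpDr // ltW.
  - rewrite hRr; apply: le_trans (expR_ge1Dx D); rewrite /D; lra.
have [f hf] := boolp.choice hk.
exists (expR (- (Sbar lam t p s * bmax))); split; first exact: expR_gt0.
exists (fun k => (f k).1.1), (fun k => (f k).1.2), (fun k => (f k).2).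
split; [|split].
- by move=> k; case: (hf k).
- apply: (ger_cvgy (f := fun n : nat => n%:R)); last exact: cvgr_idn.
  by apply: nearW => k; case: (hf k).
- by move=> k; case: (hf k).
Qed.

End PartA.

Unset Implicit Arguments.
Local Open Scope classical_set_scope.
Local Open Scope ring_scope.

Theorem proposition6p2 (R : realType) (N d : nat)
  (lam t : 'I_N -> 'I_d.+1 -> R) (p : 'I_N -> R)
  (Hlam : forall i c, 0 < lam i c < 1)
  (Hcube : forall i x, ucube x -> ucube (affmap lam t i x))
  (Hdist : forall i j : 'I_N, i <> j ->
             ~ (forall x, ucube x -> affmap lam t i x = affmap lam t j x))
  (Hdiff : forall m n : 'I_d.+1, m <> n -> exists i, lam i n <> lam i m)
  (Hp : forall i, 0 < p i) (Hp1 : \sum_(i : 'I_N) p i = 1) :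
  forall s : {perm 'I_d.+1}, inB lam s ->
  exists c : R, 0 < c /\
  exists (Rs rs : nat -> R) (ws : nat -> Sigma N),
    (forall k, 0 < Rs k < 1 /\ 0 < rs k < 1) /\
    ((fun k => Rs k / rs k) @ \oo --> +oo) /\
    (forall k, c * (Rs k / rs k) `^ (Sbar lam t p s)
               <= muB lam t p (ws k) (Rs k) / muB lam t p (ws k) (rs k)).
Proof.
move=> s hB; exact: (final_lemma Hdist Hp Hp1 Hlam hB).
Qed.
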